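(* Let $n\geq 4$ and let $\delta: VT_n\to\mathrm{GL}_{n+1}(\mathbb{C})$ be a homogeneous $3$-local representation of the virtual twin group $VT_n$. Then $\delta$ is reducible.
   Context: The virtual twin group $VT_n$ ($n\geq 2$) has generators $s_1,\dots,s_{n-1},\rho_1,\dots,\rho_{n-1}$ and defining relations: $s_i^2=1$ ($1\le i\le n-1$); $s_is_j=s_js_i$ ($|i-j|\ge2$); $\rho_i\rho_{i+1}\rho_i=\rho_{i+1}\rho_i\rho_{i+1}$ ($1\le i\le n-2$); $\rho_i\rho_j=\rho_j\rho_i$ ($|i-j|\ge2$); $\rho_i^2=1$; $s_i\rho_j=\rho_js_i$ ($|i-j|\ge2$); $\rho_i\rho_{i+1}s_i=s_{i+1}\rho_i\rho_{i+1}$ ($1\le i\le n-2$). A representation $\delta:VT_n\to\mathrm{GL}_{n+1}(\mathbb{C})$ is homogeneous $3$-local if there are fixed $M,N\in\mathrm{GL}_3(\mathbb{C})$ with $\delta(s_i)=\mathrm{diag}(I_{i-1},M,I_{n-i-1})$ and $\delta(\rho_i)=\mathrm{diag}(I_{i-1},N,I_{n-i-1})$ for all $1\le i\le n-1$ (block-diagonal, $I_r$ the $r\times r$ identity). Reducible means there is a subspace $0\neq U\neq\mathbb{C}^{n+1}$ invariant under all $\delta(g)$. *)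

(* Defs.v *)
From HB Require Import structures.
From mathcomp Require Import all_boot all_order all_algebra.
From mathcomp Require Import complex.
From mathcomp Require Import Rstruct.
Import ComplexField.
Set Implicit Arguments. Unset Strict Implicit. Unset Printing Implicit Defensive.
Import Order.TTheory GRing.Theory Num.Theory.
Local Open Scope ring_scope.

Notation CC := (complex Rdefinitions.R).

(* local_mx n i X : the (n+1)x(n+1) block-diagonal matrix
   diag(I_{i-1}, X, I_{n-i-1}) for 1 <= i <= n-1 (1-based i).
   The 3x3 block occupies the (0-based) rows/columns i-1, i, i+1. *)
Definition local_mx (n i : nat) (X : 'M[CC]_3) : 'M[CC]_(n.+1) :=
  \matrix_(a < n.+1, b < n.+1)
    if (i.-1 <= a < i.+2)%N && (i.-1 <= b < i.+2)%N
    then X (inord (a - i.-1)) (inord (b - i.-1))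
    else (a == b)%:R.

(* The defining relations of VT_n hold for the assignment
   s_i |-> local_mx n i M, rho_i |-> local_mx n i N (1 <= i <= n-1);
   i.e. this assignment extends to a homomorphism VT_n -> GL_{n+1}(C). *)
Definition VT_relations (n : nat) (M N : 'M[CC]_3) : Prop :=
  let S i := local_mx n i M in
  let P i := local_mx n i N in
     (forall i, (1 <= i <= n.-1)%N -> S i *m S i = 1%:M) /\
      (forall i j, (1 <= i <= n.-1)%N -> (1 <= j <= n.-1)%N ->
          (i.+2 <= j \/ j.+2 <= i)%N -> S i *m S j = S j *m S i) /\
      (forall i, (1 <= i <= n.-2)%N ->
          P i *m P i.+1 *m P i = P i.+1 *m P i *m P i.+1) /\
      (forall i j, (1 <= i <= n.-1)%N -> (1 <= j <= n.-1)%N ->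
          (i.+2 <= j \/ j.+2 <= i)%N -> P i *m P j = P j *m P i) /\
      (forall i, (1 <= i <= n.-1)%N -> P i *m P i = 1%:M) /\
      (forall i j, (1 <= i <= n.-1)%N -> (1 <= j <= n.-1)%N ->
          (i.+2 <= j \/ j.+2 <= i)%N -> S i *m P j = P j *m S i) /\
      (forall i, (1 <= i <= n.-2)%N ->
          P i *m P i.+1 *m S i = S i.+1 *m P i *m P i.+1).

Definition VT_gens (n : nat) (M N : 'M[CC]_3) : seq 'M[CC]_(n.+1) :=
  [seq local_mx n i M | i <- iota 1 n.-1] ++ [seq local_mx n i N | i <- iota 1 n.-1].

(* The subgroup of GL_{m} generated by a list of matrices
   (= the image delta(VT_n) when gens are the generator images). *)
Inductive in_gen_group (m : nat) (gens : seq 'M[CC]_m) : 'M[CC]_m -> Prop :=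
  | gen_one : in_gen_group gens 1%:M
  | gen_base : forall A, A \in gens -> in_gen_group gens A
  | gen_mul : forall A B, in_gen_group gens A -> in_gen_group gens B ->
      in_gen_group gens (A *m B)
  | gen_inv : forall A, in_gen_group gens A -> in_gen_group gens (invmx A).

(* A subspace U of C^m (column vectors), represented as the row space of a
   matrix U (so v lies in U iff (v^T <= U)%MS), is invariant under A. *)
Definition invariant_subspace (m : nat) (U : 'M[CC]_m) (A : 'M[CC]_m) : Prop :=
  forall v : 'cV[CC]_m, (v^T <= U)%MS -> ((A *m v)^T <= U)%MS.

Definition reducible (m : nat) (gens : seq 'M[CC]_m) : Prop :=
  exists U : 'M[CC]_m,
    [/\ \rank U != 0%N, \rank U != m &
        forall A, in_gen_group gens A -> invariant_subspace U A].

(* Main.v *)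
Require Import Defs.
From HB Require Import structures.
From mathcomp Require Import all_boot all_order all_algebra.
From mathcomp Require Import complex Rstruct zify.
Import ComplexField.
Set Implicit Arguments. Unset Strict Implicit. Unset Printing Implicit Defensive.
Import Order.TTheory GRing.Theory Num.Theory.
Local Open Scope ring_scope.

Lemma group_stable m (gens : seq 'M[CC]_m) (U : 'M[CC]_m) :
  (forall G, G \in gens -> G \in unitmx /\ (U *m G^T <= U)%MS) ->
  forall A, in_gen_group gens A -> A \in unitmx /\ (U *m A^T <= U)%MS.
Proof.
move=> hg A; elim=> {A}.
- by split; [exact: unitmx1 | rewrite trmx1 mulmx1].
- exact: hg.
- move=> A B _ [uA sA] _ [uB sB]; split; first by rewrite unitmx_mul uA uB.
  by rewrite trmx_mul mulmxA; apply: submx_trans (submxMr _ sB) sA.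
- move=> A _ [uA sA]; split; first by rewrite unitmx_inv.
  have uAt : A^T \in unitmx by rewrite unitmx_tr.
  have e : (U *m A^T == U)%MS.
    by rewrite -(mxrank_leqif_eq sA) mxrankMfree // row_free_unit.
  have h : (U <= U *m A^T)%MS by case/andP: e.
  by rewrite trmx_inv; have := submxMr (invmx A^T) h; rewrite mulmxK.
Qed.

Lemma reducible_of m (gens : seq 'M[CC]_m) (U : 'M[CC]_m) :
  \rank U != 0%N -> \rank U != m ->
  (forall G, G \in gens -> G \in unitmx /\ (U *m G^T <= U)%MS) ->
  reducible gens.
Proof.
move=> r0 rm hg; exists U; split=> // A /(group_stable hg) [_ sA] v hv.
by rewrite trmx_mul; apply: submx_trans (submxMr _ hv) sA.
Qed.

Lemma diag_stable N (p : pred 'I_N) (G : 'M[CC]_N) :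
  (forall i j, p i -> ~~ p j -> G j i = 0) ->
  (diag_mx (\row_i (p i)%:R) *m G^T <= diag_mx (\row_i (p i)%:R))%MS.
Proof.
move=> hG; set U := diag_mx _.
have -> : U *m G^T = U *m G^T *m U.
  apply/matrixP=> i j; rewrite mul_mx_diag mul_diag_mx !mxE.
  case pi: (p i); case pj: (p j); rewrite ?mul0r ?mulr1 ?mul1r ?mulr0 //.
  by rewrite hG ?pi ?pj.
exact: submxMl.
Qed.

Lemma diag_rank N (p : pred 'I_N) i j : p i -> ~~ p j ->
  \rank (diag_mx (\row_i (p i)%:R) : 'M[CC]_N) != 0%N /\
  \rank (diag_mx (\row_i (p i)%:R) : 'M[CC]_N) != N.
Proof.
move=> pi pj; split.
  rewrite mxrank_eq0; apply/eqP=> /matrixP /(_ i i); rewrite !mxE eqxx pi /=.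
  by move/eqP; rewrite oner_eq0.
apply/negP=> /eqP e.
have : (diag_mx (\row_i (p i)%:R) : 'M[CC]_N) \in unitmx.
  by rewrite -row_free_unit /row_free e.
rewrite unitmxE det_diag (bigD1 j) //= mxE (negbTE pj) mul0r unitr0.
by [].
Qed.

Lemma local_out n i (X : 'M[CC]_3) (a b : 'I_n.+1) :
  ~~ ((i.-1 <= a < i.+2)%N && (i.-1 <= b < i.+2)%N) -> local_mx n i X a b = (a == b)%:R.
Proof. by move=> h; rewrite mxE (negbTE h). Qed.

Lemma local_in n i (X : 'M[CC]_3) (a b : 'I_n.+1) :
  ((i.-1 <= a < i.+2)%N && (i.-1 <= b < i.+2)%N) ->
  local_mx n i X a b = X (inord (a - i.-1)) (inord (b - i.-1)).
Proof. by move=> h; rewrite mxE h. Qed.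

Lemma gens_prop n (M N : 'M[CC]_3) (Q : 'M[CC]_n.+1 -> Prop) :
  (forall i, (1 <= i <= n.-1)%N -> Q (local_mx n i M) /\ Q (local_mx n i N)) ->
  forall G, G \in VT_gens n M N -> Q G.
Proof.
move=> h G; rewrite mem_cat => /orP [] hG.
  have [i hi ->] := mapP hG; rewrite mem_iota in hi.
  by apply: (h i _).1; lia.
have [i hi ->] := mapP hG; rewrite mem_iota in hi.
by apply: (h i _).2; lia.
Qed.

Lemma case1_entry m i (X : 'M[CC]_3) (j : 'I_(m.+4.+1)) : (1 <= i)%N ->
  X (inord 0) (inord 1) = 0 -> X (inord 0) (inord 2) = 0 -> j != ord0 ->
  local_mx m.+4 i X ord0 j = 0.
Proof.
move=> i1 h1 h2 j0; have jl := ltn_ord j.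
have jv : (j : nat) != 0%N by apply: contra j0 => /eqP e; apply/eqP/val_inj.
case hc: ((i == 1)%N && (j < 3)%N).
  move/andP: hc => [/eqP -> j3].
  rewrite local_in /=; last by lia.
  rewrite subn0; case: j jv j3 {j0 jl} => [[|[|[|j']]] hj] //= _ _.
move/negbT: hc => hc.
rewrite local_out /=; last by apply/negP; lia.
by rewrite (_ : (ord0 == j) = false) // eq_sym; apply/negbTE.
Qed.

Lemma case2_entry m i (X : 'M[CC]_3) (j : 'I_(m.+4.+1)) : (1 <= i <= m.+3)%N ->
  X (inord 0) (inord 2) = 0 -> X (inord 1) (inord 2) = 0 -> j != ord_max ->
  local_mx m.+4 i X j ord_max = 0.
Proof.
move=> i1 h1 h2 j0; have jl := ltn_ord j.
have jv : (j : nat) != m.+4 by apply: contra j0 => /eqP e; apply/eqP/val_inj.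
case hc: ((i == m.+3)%N && (m.+2 <= j)%N).
  move/andP: hc => [/eqP -> j3].
  rewrite local_in /=; last by lia.
  have -> : (m.+4 - m.+2 = 2)%N by lia.
  have [->|->] : (j - m.+2 = 0 \/ j - m.+2 = 1)%N by lia.
    by [].
  by [].
move/negbT: hc => hc.
rewrite local_out /=; last by apply/negP; lia.
by rewrite (_ : (j == ord_max) = false) //; apply/negbTE.
Qed.

Lemma comm13 m (A B : 'M[CC]_3) :
  local_mx m.+4 1 A *m local_mx m.+4 3 B = local_mx m.+4 3 B *m local_mx m.+4 1 A ->
  A (inord 0) (inord 2) * B (inord 0) (inord 2) = 0 /\
  A (inord 1) (inord 2) * B (inord 0) (inord 1) = 0.
Proof.
move=> H; split.
- have := congr1 (fun X : matrix CC (m.+4.+1) (m.+4.+1) => X (inord 0) (inord 4)) H; rewrite /= [LHS]mxE [RHS]mxE.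
  rewrite (bigD1 (inord 2)) //= big1 ?addr0; last first.
    move=> k hk; have hk' : (k : nat) != 2%N.
      by apply: contra hk => /eqP e; apply/eqP/val_inj; rewrite /= inordK // e.
    case: (ltnP k 3) => hk3.
      rewrite [local_mx _ 3 _ _ _]local_out; last by rewrite ?inordK //; apply/negP; lia.
      by rewrite (_ : (k == inord 4) = false) ?mulr0 //; apply/negP => /eqP/(congr1 val); rewrite /= inordK //; lia.
    rewrite [local_mx _ 1 _ _ _]local_out; last by rewrite ?inordK //; apply/negP; lia.
    by rewrite (_ : (inord 0 == k) = false) ?mul0r //; apply/negP => /eqP/(congr1 val); rewrite /= inordK //; lia.
  rewrite big1; last first.
    move=> k _; rewrite local_out; last by rewrite ?inordK //; apply/negP; lia.
    rewrite [local_mx _ 1 _ _ _]local_out; last by rewrite ?inordK //; apply/negP; lia.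
    case: eqP => [<-|]; last by rewrite mul0r.
    by rewrite (_ : (inord 0 == inord 4 :> 'I_((m.+4.+1))) = false) ?mulr0 //; apply/negP => /eqP/(congr1 val); rewrite /= !inordK.
  rewrite !local_in ?inordK //.
  
- have := congr1 (fun X : matrix CC (m.+4.+1) (m.+4.+1) => X (inord 1) (inord 3)) H; rewrite /= [LHS]mxE [RHS]mxE.
  rewrite (bigD1 (inord 2)) //= big1 ?addr0; last first.
    move=> k hk; have hk' : (k : nat) != 2%N.
      by apply: contra hk => /eqP e; apply/eqP/val_inj; rewrite /= inordK // e.
    case: (ltnP k 3) => hk3.
      rewrite [local_mx _ 3 _ _ _]local_out; last by rewrite ?inordK //; apply/negP; lia.
      by rewrite (_ : (k == inord 3) = false) ?mulr0 //; apply/negP => /eqP/(congr1 val); rewrite /= inordK //; lia.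
    rewrite [local_mx _ 1 _ _ _]local_out; last by rewrite ?inordK //; apply/negP; lia.
    by rewrite (_ : (inord 1 == k) = false) ?mul0r //; apply/negP => /eqP/(congr1 val); rewrite /= inordK //; lia.
  rewrite big1; last first.
    move=> k _; rewrite local_out; last by rewrite ?inordK //; apply/negP; lia.
    rewrite [local_mx _ 1 _ _ _]local_out; last by rewrite ?inordK //; apply/negP; lia.
    case: eqP => [<-|]; last by rewrite mul0r.
    by rewrite (_ : (inord 1 == inord 3 :> 'I_((m.+4.+1))) = false) ?mulr0 //; apply/negP => /eqP/(congr1 val); rewrite /= !inordK.
  rewrite !local_in ?inordK //.
  
Qed.


Theorem theorem4p3 (n : nat) (M N : 'M[CC]_3) :
  (4 <= n)%N ->
  M \in unitmx -> N \in unitmx ->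
  VT_relations n M N ->
  reducible (VT_gens n M N).
Proof.
case: n => [|[|[|[|m]]]] // _ uM uN [hS2 [hSc [_ [hPc [hP2 [hSP _]]]]]].
have i13 : (1 <= 1 <= (m.+4).-1)%N by [].
have i33 : (1 <= 3 <= (m.+4).-1)%N by [].
have d13 : (1.+2 <= 3 \/ 3.+2 <= 1)%N by left.
have d31 : (3.+2 <= 1 \/ 1.+2 <= 3)%N by right.
have [cMM fMbM] := comm13 (hSc _ _ i13 i33 d13).
have [cNN fNbN] := comm13 (hPc _ _ i13 i33 d13).
have [_ fMbN] := comm13 (hSP _ _ i13 i33 d13).
have [_ fNbM] := comm13 (esym (hSP _ _ i33 i13 d31)).
have cM : M (inord 0) (inord 2) = 0 by move/eqP: cMM; rewrite mulf_eq0 orbb => /eqP.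
have cN : N (inord 0) (inord 2) = 0 by move/eqP: cNN; rewrite mulf_eq0 orbb => /eqP.
have units : forall i, (1 <= i <= (m.+4).-1)%N ->
    local_mx m.+4 i M \in unitmx /\ local_mx m.+4 i N \in unitmx.
  by move=> i hi; split; [exact: (mulmx1_unit (hS2 i hi)).1 | exact: (mulmx1_unit (hP2 i hi)).1].
case: (boolP ((M (inord 1) (inord 2) == 0) && (N (inord 1) (inord 2) == 0))).
- case/andP => /eqP fM /eqP fN.
  pose p := fun j : 'I_(m.+4.+1) => j == ord_max.
  have [r0 rm] := @diag_rank _ p ord_max ord0 (eqxx _) isT.
  apply: (reducible_of r0 rm).
  apply: gens_prop => i hi; have [uiM uiN] := units i hi.
  split; split => //; apply: diag_stable => a b /eqP -> hb.
    by apply: case2_entry.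
  by apply: case2_entry.
- rewrite negb_and => hf.
  have bM : M (inord 0) (inord 1) = 0.
    case/orP: hf => h.
      by move/eqP: fMbM; rewrite mulf_eq0 (negbTE h) /= => /eqP.
    by move/eqP: fNbM; rewrite mulf_eq0 (negbTE h) /= => /eqP.
  have bN : N (inord 0) (inord 1) = 0.
    case/orP: hf => h.
      by move/eqP: fMbN; rewrite mulf_eq0 (negbTE h) /= => /eqP.
    by move/eqP: fNbN; rewrite mulf_eq0 (negbTE h) /= => /eqP.
  pose p := fun j : 'I_(m.+4.+1) => j != ord0.
  have [r0 rm] := @diag_rank _ p ord_max ord0 isT (negbK _).
  apply: (reducible_of r0 rm).
  apply: gens_prop => i hi; have [uiM uiN] := units i hi.
  split; split => //; apply: diag_stable => a b ha /negPn /eqP ->.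
    by apply: case1_entry => //; case/andP: hi.
  by apply: case1_entry => //; case/andP: hi.
Qed.
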